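(* Let $p$ be a prime greater than $3$. Then $$\sum_{k=0}^{[p/3]}\frac{(3k)!}{27^k\,k!^3}\equiv\Big(\frac p3\Big)\pmod p.$$
   Context: $[y]$ is the greatest integer not exceeding $y$; $\big(\frac p3\big)$ is the Legendre symbol. *)

(* Defs.v *)
From HB Require Import structures.
From mathcomp Require Import all_boot all_order all_algebra.
Set Implicit Arguments. Unset Strict Implicit. Unset Printing Implicit Defensive.
Import Order.TTheory GRing.Theory Num.Theory.

Definition legendre (a q : nat) : int :=
  if q %| a then 0%R
  else if [exists x : 'I_q, (x ^ 2) %% q == a %% q] then 1%R else (-1)%R.

(* Main.v *)
Require Import Defs.
From HB Require Import structures.
From mathcomp Require Import all_boot all_order all_algebra.
From mathcomp Require Import ring lra zify.
Import Order.TTheory GRing.Theory Num.Theory.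
Local Open Scope ring_scope.

Lemma fnat0 p n (hp : prime p) : (n%:R == 0 :> 'F_p) = (p %| n)%N.
Proof. by rewrite (dvdn_pcharf (pchar_Fp hp)). Qed.

Lemma ndvd_fact p k (hp : prime p) : (k < p)%N -> ~~ (p %| k`!)%N.
Proof.
elim: k => [|k IH] hk; first by rewrite fact0 dvdn1; apply/eqP => h; move: hp; rewrite h.
rewrite factS Euclid_dvdM // negb_or IH ?andbT; last by lia.
apply/negP => /dvdn_leq; lia.
Qed.

Lemma key_step p a b (hp : prime p)
  (ha : (3 * a + 1)%N%:R = 0 :> 'F_p) (hb : (3 * b + 2)%N%:R = 0 :> 'F_p) k :
  (k <= a)%N -> (k <= b)%N ->
  ((3 * k)`!)%N%:R = (27 ^ k * k`! * a ^_ k * b ^_ k)%N%:R :> 'F_p.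
Proof.
elim: k => [|k IH] hka hkb; first by rewrite muln0 expn0 !ffactn0 !mul1n.
rewrite (_ : (3 * k.+1 = (3 * k).+3)%N); last by lia.
rewrite !factS !ffactnSr expnS.
have IH' := IH (ltnW hka) (ltnW hkb).
move: IH'.
set FA := (a ^_ k)%N; set FB := (b ^_ k)%N; set F := ((3 * k)`!)%N; set FK := (k`!)%N; set E := (27 ^ k)%N.
move=> IH'.
rewrite !natrM IH' !natrM !natrB; try lia.
rewrite mulnC in ha; rewrite mulnC in hb.
move: ha hb; rewrite !natrD !natrM => ha hb.
set A := a%:R in ha *; set B := b%:R in hb *; set K := (k%:R : 'F_p).
have e3 : ((3 * k).+3)%:R = 3%:R * K + 3%:R :> 'F_p by rewrite -[(3 * k).+3]addn3 mulnC natrD natrM mulrC.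
have e2' : ((3 * k).+2)%:R = 3%:R * K + 2%:R :> 'F_p by rewrite -[(3 * k).+2]addn2 mulnC natrD natrM mulrC.
have e1' : ((3 * k).+1)%:R = 3%:R * K + 1 :> 'F_p by rewrite -[(3 * k).+1]addn1 mulnC natrD natrM mulrC.
have ek : (k.+1)%:R = K + 1 :> 'F_p by rewrite -[k.+1]addn1 natrD.
have e27 : 27 = 3%:R * 3%:R * 3%:R :> 'F_p by rewrite -!natrM.
have e1 : 3%:R * (A - K) = - (3%:R * K + 1) :> 'F_p.
  by apply/eqP; rewrite -subr_eq0 opprK -ha; apply/eqP; ring.
have e2 : 3%:R * (B - K) = - (3%:R * K + 2%:R) :> 'F_p.
  by apply/eqP; rewrite -subr_eq0 opprK -hb; apply/eqP; ring.
rewrite e3 e2' e1' ek e27.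
transitivity ((E%:R * FK%:R * FA%:R * FB%:R) * ((3%:R * (A - K)) * (3%:R * (B - K)) * (3%:R * (K + 1))) : 'F_p); last by ring.
rewrite e1 e2; ring.
Qed.

Lemma binpm1 p (hp : prime p) j : (j < p)%N -> ('C(p.-1, j))%:R = (-1) ^+ j :> 'F_p.
Proof.
elim: j => [|j IH] hj; first by rewrite bin0 expr0.
have hC : ('C(p, j.+1))%:R = 0 :> 'F_p.
  by apply/eqP; rewrite fnat0 // prime_dvd_bin // hj.
move: hC; rewrite -(prednK (prime_gt0 hp)) binS natrD prednK ?prime_gt0 //.
rewrite IH; last by lia.
by move/eqP; rewrite addr_eq0 => /eqP ->; rewrite exprS mulN1r.
Qed.

Lemma vand x y : (\sum_(j < x.+1) 'C(y, j) * 'C(x, j) = 'C(y + x, x))%N.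
Proof.
rewrite -binomial.Vandermonde; apply: eq_bigr => j _.
by rewrite bin_sub // -ltnS.
Qed.

Lemma main_sum p m a b (hp : prime p) (hp3 : (3 < p)%N) (hm : (m < p)%N)
  (ha : (3 * a + 1)%N%:R = 0 :> 'F_p) (hb : (3 * b + 2)%N%:R = 0 :> 'F_p)
  (hma : (m <= a)%N) (hmb : (m <= b)%N) :
  \sum_(0 <= k < m.+1)
      (((3 * k)`!)%:R / ((27 ^ k * (k`!) ^ 3)%:R) : 'F_p)
  = (\sum_(k < m.+1) 'C(a, k) * 'C(b, k))%N%:R.
Proof.
rewrite big_mkord natr_sum; apply: eq_bigr => [[k hk]] _ /=.
rewrite (@key_step p a b hp ha hb k); try lia.
rewrite -!bin_ffact.
have -> : (27 ^ k * k`! * ('C(a, k) * k`!) * ('C(b, k) * k`!) =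
          (27 ^ k * k`! ^ 3) * ('C(a, k) * 'C(b, k)))%N by ring.
rewrite [X in X / _]natrM mulrAC divff ?mul1r //.
rewrite fnat0 // Euclid_dvdM // !Euclid_dvdX // negb_or !negb_and.
apply/andP; split; apply/orP; left.
  apply/negP => /(dvdn_trans)/(_ (isT : (27 %| 3 ^ 3)%N)) h.
  by move: h; rewrite Euclid_dvdX // andbT => /dvdn_leq; lia.
apply: ndvd_fact => //; lia.
Qed.

(* Congruence of p-integral rationals mod p, read in the prime field 'F_p. *)
Theorem corollary2p2 (p : nat) (hp : prime p) (hp3 : (3 < p)%N) :
  \sum_(0 <= k < (p %/ 3).+1)
      (((3 * k)`!)%:R / ((27 ^ k * (k`!) ^ 3)%:R) : 'F_p)
  = (legendre p 3)%:~R.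
Proof.
set m := (p %/ 3)%N.
have hpm := divn_eq p 3.
have hr : (p %% 3 < 3)%N by rewrite ltn_mod.
have hr0 : (p %% 3 != 0)%N.
  apply/negP => /eqP h; have : (3 %| p)%N by rewrite /dvdn h.
  by rewrite dvdn_prime2 //; lia.
have hodd : odd p by case: (even_prime hp) => [h|//]; rewrite h in hp3.
have hpF : p%:R = 0 :> 'F_p by rewrite pchar_Fp_0.
have h2p : (2 * p)%:R = 0 :> 'F_p by rewrite natrM hpF mulr0.
have hpm1 : p.-1 = (m * 3 + p %% 3).-1 by rewrite -hpm.
rewrite /legendre.
have n3p : ~~ (3 %| p)%N by rewrite /dvdn.
rewrite (negbTE n3p).
case hr1 : (p %% 3 == 1)%N.
- rewrite (@main_sum p m m (2 * m)%N hp hp3); try lia.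
  + rewrite (eq_bigr (fun k : 'I_m.+1 => 'C(2 * m, k) * 'C(m, k))%N);
      last by move=> i _; rewrite mulnC.
    rewrite vand (_ : (2 * m + m = p.-1)%N); last by lia.
    rewrite binpm1 //; last by lia.
    rewrite -signr_odd (_ : odd m = false); last first.
      move: hodd; rewrite hpm (eqP hr1) addn1 /= oddM /= andbT; by case: (odd m).
    rewrite expr0.
    have -> : [exists x : 'I_3, ((x ^ 2) %% 3 == p %% 3)%N].
      by apply/existsP; exists (Ordinal (isT : (1 < 3)%N)); rewrite (eqP hr1).
    by [].
  + by rewrite (_ : (3 * m + 1 = p)%N) //; lia.
  + by rewrite (_ : (3 * (2 * m) + 2 = 2 * p)%N) //; lia.
- have hr2 : (p %% 3 = 2)%N by move/negbT: hr1; lia.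
  rewrite (@main_sum p m (2 * m).+1 m hp hp3); try lia.
    rewrite vand (_ : ((2 * m).+1 + m = p.-1)%N); last by lia.
    rewrite binpm1 //; last by lia.
    rewrite -signr_odd (_ : odd m = true); last first.
      move: hodd; rewrite hpm hr2 addn2 /= oddM /= andbT; by case: (odd m).
    rewrite expr1.
    have -> : [exists x : 'I_3, ((x ^ 2) %% 3 == p %% 3)%N] = false.
      apply/negbTE/existsP => [[x]]; rewrite hr2.
      by case: x => [[|[|[|]]] ?].
    by [].
  + by rewrite (_ : (3 * (2 * m).+1 + 1 = 2 * p)%N) //; lia.
  + by rewrite (_ : (3 * m + 2 = p)%N) //; lia.
Qed.
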